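(* Let $(A,B)$ be a Katsura pair with $B\in M_N(\{0,1\})$ such that the KEP-action $(G_B,E_A)$ is regular. Suppose $v=(v_k)\in E_C^{-\infty}$ satisfies $B_{v_{k-1},v_k}=1$ for all $k<0$. Then for $\mu,\nu\in X_v$, $\mu\sim_{ae}\nu$ if and only if $C_v(\iota_v(\mu))=C_v(\iota_v(\nu))$.
   Context: Katsura pair: $N\in\mathbb{N}$, $A\in M_N(\mathbb{N})$ (nonnegative integers), $B\in M_N(\mathbb{Z})$ with $A_{ij}=0\Rightarrow B_{ij}=0$. Graph $E_A$: vertices $\{1,\dots,N\}$, edges $e_{i,j,m}$ ($0\le m<A_{ij}$), $r=i$, $s=j$; $E_A^{-\infty}$ left-infinite paths $\cdots\mu_{-2}\mu_{-1}$ with $s(\mu_k)=r(\mu_{k+1})$. The group bundle $\mathbb{Z}\times E_A^0$ (elements $a_i^k$) acts by $a_i^k\cdot e_{i,j,m}=e_{i,j,\hat m}$, $a_i^k|_{e_{i,j,m}}=a_j^{\hat k}$ where $kB_{ij}+m=\hat kA_{ij}+\hat m$, $0\le\hat m<A_{ij}$, extended recursively to finite paths; $G_B$ is the faithful quotient and $(G_B,E_A)$ the KEP-action. Regular: for every $g\in G_B$ there is $K$ such that $g\cdot\mu=\mu$, $|\mu|\ge K$ imply $g|_\mu$ is the unit at $s(\mu)$. $\mu\sim_{ae}\nu$ iff there are a finite $F\subseteq G_B$ and $(g_n)_{n<0}\subseteq F$ with $d(g_n)=r(\mu_n)$ and $g_n\cdot\mu_n\cdots\mu_{-1}=\nu_n\cdots\nu_{-1}$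 for all $n<0$. $C$ is the connectivity matrix of $E_A$ ($C_{ij}=1$ if $A_{ij}>0$, else $0$) with graph $E_C$; an element $v\in E_C^{-\infty}$ is encoded by its vertex sequence $(v_k)_{k\le-1}$, $v_k$ the source of the $k$-th edge and $v_{k-1}$ its range. $A_{v[k,-1]}=\prod_{j=k}^{-1}A_{v_{j-1},v_j}$. $X_v=\{\mu\in E_A^{-\infty}: s(\mu_k)=v_k\ \forall k<0\}$, $\mathcal{A}_v=\prod_{k<0}\{0,\dots,A_{v_{k-1},v_k}-1\}$, and $\iota_v:X_v\to\mathcal{A}_v$ sends $\cdots e_{v_{-3},v_{-2},i_{-2}}e_{v_{-2},v_{-1},i_{-1}}$ to $(\dots,i_{-2},i_{-1})$. $C_v:\mathcal{A}_v\to\mathbb{R}/\mathbb{Z}$ is $C_v(\dots,i_{-2},i_{-1})=\sum_{k=-1}^{-\infty}\frac{i_k}{A_{v[k,-1]}}\bmod 1$. *)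

(* Defs.v *)
From Stdlib Require Import Reals ZArith Arith List.
From Coquelicot Require Import Coquelicot.
Import ListNotations.
Local Open Scope nat_scope.

(* Edges e_{i,j,m} of E_A: range er = i, source es = j, label em = m. *)
Record edge := mkEdge { er : nat; es : nat; em : nat }.

Section KEP.
Variables (N : nat) (A : nat -> nat -> nat) (B : nat -> nat -> Z).

Definition katsura_pair : Prop :=
  forall i j, i < N -> j < N -> A i j = 0 -> B i j = 0%Z.

Definition valid_edge (e : edge) : Prop :=
  er e < N /\ es e < N /\ em e < A (er e) (es e).

(* Finite path mu_1 ... mu_n (list head = mu_1) with range i:
   r(mu_1) = i and s(mu_k) = r(mu_{k+1}). *)
Fixpoint valid_path (i : nat) (p : list edge) : Prop :=
  match p with
  | [] => True
  | e :: q => valid_edge e /\ er e = i /\ valid_path (es e) q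
  end.

Fixpoint path_src (i : nat) (p : list edge) : nat :=
  match p with
  | [] => i
  | e :: q => path_src (es e) q
  end.

(* a_{r(e)}^k . e and a_{r(e)}^k |_e : k B_ij + m = khat A_ij + mhat, 0 <= mhat < A_ij *)
Definition act_edge (k : Z) (e : edge) : edge * Z :=
  let t := (k * B (er e) (es e) + Z.of_nat (em e))%Z in
  let a := Z.of_nat (A (er e) (es e)) in
  (mkEdge (er e) (es e) (Z.to_nat (t mod a)), (t / a)%Z).

(* recursive extension to finite paths: returns (a^k . p, integer of a^k|_p);
   the restriction a^k|_p lives at the vertex path_src i p *)
Fixpoint act_path (k : Z) (p : list edge) : list edge * Z :=
  match p with
  | [] => ([], k)
  | e :: q =>
      let (e', k') := act_edge k e in
      let (q', k'') := act_path k' q in (e' :: q', k'')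
  end.

(* a_i^k and a_i^k' define the same element of the faithful quotient G_B *)
Definition gequiv (i : nat) (k k' : Z) : Prop :=
  forall p, valid_path i p -> fst (act_path k p) = fst (act_path k' p).

(* Regularity of (G_B, E_A), stated on representatives a_i^k of elements of G_B;
   the unit at vertex j is the class of a_j^0. *)
Definition regular : Prop :=
  forall (i : nat) (k : Z), i < N ->
    exists K : nat, forall p, valid_path i p -> K <= length p ->
      fst (act_path k p) = p ->
      gequiv (path_src i p) (snd (act_path k p)) 0%Z.

(* Left-infinite paths: mu n stands for mu_{-(n+1)};
   s(mu_{-(n+2)}) = r(mu_{-(n+1)}). *)
Definition linf_path (mu : nat -> edge) : Prop :=
  forall n, valid_edge (mu n) /\ es (mu (S n)) = er (mu n).

Fixpoint trunc (mu : nat -> edge) (n : nat) : list edge :=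
  match n with
  | O => [mu O]
  | S m => mu (S m) :: trunc mu m
  end.

(* asymptotic equivalence ~ae.  An element g_n of G_B is given by a
   representative (vertex, integer) = a_vertex^integer; the finite set F of
   G_B is given by a finite list of representatives. *)
Definition ae_equiv (mu nu : nat -> edge) : Prop :=
  exists (F : list (nat * Z)) (g : nat -> nat * Z),
    forall n, In (g n) F /\ fst (g n) = er (mu n) /\
              fst (act_path (snd (g n)) (trunc mu n)) = trunc nu n.

(* v in E_C^{-oo}, vertex sequence v n = v_{-(n+1)}; edge v_{k-1} -> v_k exists. *)
Definition in_EC (v : nat -> nat) : Prop :=
  forall n, v n < N /\ 0 < A (v (S n)) (v n).

Definition in_X (v : nat -> nat) (mu : nat -> edge) : Prop :=
  linf_path mu /\ forall n, es (mu n) = v n.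

Definition iota_v (mu : nat -> edge) : nat -> nat := fun n => em (mu n).

Fixpoint Aprod (v : nat -> nat) (n : nat) : nat :=
  match n with
  | O => A (v 1) (v 0)
  | S m => Aprod v m * A (v (S (S m))) (v (S m))
  end.

(* real representative of C_v(x) = sum_k i_k / A_{v[k,-1]}  (value in R/Z) *)
Definition C_v_real (v : nat -> nat) (x : nat -> nat) : R :=
  Series (fun n => (INR (x n) / INR (Aprod v n))%R).

End KEP.

Definition eq_mod1 (x y : R) : Prop := exists z : Z, (x - y)%R = IZR z.

(* Main.v *)
Require Import Defs.
From Stdlib Require Import Reals ZArith Arith List Lia Lra Classical FunctionalExtensionality.
From Coquelicot Require Import Coquelicot.
Import ListNotations.
Open Scope nat_scope.

Fixpoint Wz (A : nat -> nat -> nat) (v : nat -> nat) (x : nat -> nat) (n : nat) : Z :=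
  match n with
  | O => Z.of_nat (x 0)
  | S m => (Z.of_nat (x (S m)) + Z.of_nat (A (v (S (S m))) (v (S m))) * Wz A v x m)%Z
  end.

Definition good (A : nat -> nat -> nat) (v : nat -> nat) (mu : nat -> edge) : Prop :=
  forall j, er (mu j) = v (S j) /\ es (mu j) = v j /\ em (mu j) < A (v (S j)) (v j).

Lemma step_Z (a d d' k Wm Wn P : Z) : (0 < a)%Z -> (0 <= d' < a)%Z ->
  ((k + d) mod a = d' /\ exists c, Wn = Wm + (k + d) / a - c * P)%Z <->
  (exists c, d' + a * Wn = d + a * Wm + k - c * (P * a))%Z.
Proof.
  intros ha hd'. pose proof (Z.div_mod (k + d) a ltac:(lia)) as E.
  split.
  - intros [H1 [c Hc]]. exists c. subst. nia.
  - intros [c Hc].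
    assert (Hm : ((k + d) mod a = d')%Z).
    { rewrite <- (Z.mod_small d' a) by lia.
      replace d' with ((k + d) + (Wm - Wn - c * P) * a)%Z by nia.
      now rewrite Z.mod_add by lia. }
    split; [exact Hm|]. exists c.
    apply (Z.mul_reg_l _ _ a); [lia|]. nia.
Qed.

Lemma edge_eq (e e' : edge) : er e = er e' -> es e = es e' -> em e = em e' -> e = e'.
Proof. destruct e, e'; simpl; intros; subst; reflexivity. Qed.

Lemma act_path_cons A B k e q : act_path A B k (e :: q) =
  (fst (act_edge A B k e) :: fst (act_path A B (snd (act_edge A B k e)) q),
   snd (act_path A B (snd (act_edge A B k e)) q)).
Proof. change (act_path A B k (e :: q)) with (let (e', k') := act_edge A B k e in
      let (q', k'') := act_path A B k' q in (e' :: q', k'')).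
  destruct (act_edge A B k e) as [e' k']. cbn [fst snd]. destruct (act_path A B k' q). reflexivity. Qed.

Lemma act_trunc_iff A B v mu nu
  (hpos : forall j, 0 < A (v (S j)) (v j))
  (hB : forall n, B (v (S n)) (v n) = 1%Z)
  (gm : good A v mu) (gn : good A v nu) :
  forall n k, fst (act_path A B k (trunc mu n)) = trunc nu n <->
    exists c : Z, Wz A v (iota_v nu) n = (Wz A v (iota_v mu) n + k - c * Z.of_nat (Aprod A v n))%Z.
Proof.
  assert (Hedge : forall n k,
    act_edge A B k (mu n) =
      (mkEdge (v (S n)) (v n) (Z.to_nat ((k + Z.of_nat (em (mu n))) mod Z.of_nat (A (v (S n)) (v n)))),
       ((k + Z.of_nat (em (mu n))) / Z.of_nat (A (v (S n)) (v n)))%Z)).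
  { intros n k. unfold act_edge. destruct (gm n) as [h1 [h2 _]]. rewrite h1, h2, hB.
    rewrite Z.mul_1_r. reflexivity. }
  assert (Hedq : forall n e, mkEdge (v (S n)) (v n) e = nu n <-> e = em (nu n)).
  { intros n e. destruct (gn n) as [h1 [h2 _]]. split.
    - intros <-. reflexivity.
    - intros ->. apply edge_eq; simpl; auto. }
  induction n as [|m IH]; intros k.
  - cbn -[act_edge]. rewrite Hedge. cbn -[Z.to_nat Z.modulo Z.div].
    specialize (hpos 0). destruct (gm 0) as [_ [_ h3]]. destruct (gn 0) as [_ [_ h4]].
    unfold iota_v.
    pose proof (step_Z (Z.of_nat (A (v 1) (v 0))) (Z.of_nat (em (mu 0))) (Z.of_nat (em (nu 0))) k 0 0 1 ltac:(lia) ltac:(lia)) as HS.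
    split.
    + intros H. injection H as H. apply Hedq in H.
      assert (H' : ((k + Z.of_nat (em (mu O))) mod Z.of_nat (A (v 1%nat) (v O)) = Z.of_nat (em (nu O)))%Z).
      { rewrite <- H. rewrite Z2Nat.id; [reflexivity|]. apply Z.mod_pos_bound; lia. }
      destruct (proj1 HS) as [c Hc].
      { split; [exact H'|]. eexists. rewrite Z.mul_1_r. rewrite Z.add_0_l. symmetry. apply Z.sub_diag. }
      exists c. lia.
    + intros [c Hc]. f_equal. apply Hedq.
      destruct (proj2 HS) as [H1 _]. { exists c. lia. } rewrite H1. lia.
  - cbn [trunc]. rewrite act_path_cons, Hedge. cbn [fst snd].
    specialize (IH ((k + Z.of_nat (em (mu (S m)))) / Z.of_nat (A (v (S (S m))) (v (S m))))%Z).
    specialize (hpos (S m)). destruct (gm (S m)) as [_ [_ h3]]. destruct (gn (S m)) as [_ [_ h4]].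
    unfold iota_v in *. simpl Wz. simpl Aprod. rewrite Nat2Z.inj_mul.
    pose proof (step_Z (Z.of_nat (A (v (S (S m))) (v (S m)))) (Z.of_nat (em (mu (S m)))) (Z.of_nat (em (nu (S m)))) k
      (Wz A v (fun n => em (mu n)) m) (Wz A v (fun n => em (nu n)) m) (Z.of_nat (Aprod A v m)) ltac:(lia) ltac:(lia)) as HS.
    split.
    + intros H. injection H as H H0. apply Hedq in H. apply IH in H0.
      assert (H' : ((k + Z.of_nat (em (mu (S m)))) mod Z.of_nat (A (v (S (S m))) (v (S m))) = Z.of_nat (em (nu (S m))))%Z).
      { rewrite <- H. rewrite Z2Nat.id; [reflexivity|]. apply Z.mod_pos_bound; lia. }
      destruct (proj1 HS (conj H' H0)) as [c Hc]. exists c. lia.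
    + intros [c Hc]. destruct (proj2 HS) as [H1 H2]. { exists c. lia. }
      f_equal.
      * apply Hedq. rewrite H1. lia.
      * apply IH. exact H2.
Qed.


Lemma Aprod_pos A v (hpos : forall j, 0 < A (v (S j)) (v j)) : forall n, 0 < Aprod A v n.
Proof. induction n; simpl. apply hpos. specialize (hpos (S n)). nia. Qed.

Lemma Aprod_mono A v (hpos : forall j, 0 < A (v (S j)) (v j)) : forall n k, Aprod A v n <= Aprod A v (k + n).
Proof. intros n k. induction k; simpl. lia. specialize (hpos (S (k + n))). nia. Qed.

Definition Ssum A v x n : R := sum_n (fun j => (INR (x j) / INR (Aprod A v j))%R) n.

Lemma Ssum_eq A v x (hpos : forall j, 0 < A (v (S j)) (v j)) :
  forall n, Ssum A v x n = (IZR (Wz A v x n) / INR (Aprod A v n))%R.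
Proof.
  unfold Ssum. induction n.
  - rewrite sum_O. simpl. rewrite <- INR_IZR_INZ. reflexivity.
  - rewrite sum_Sn. change plus with Rplus. simpl (Aprod A v (S n)). simpl Wz.
    rewrite IHn. rewrite plus_IZR, mult_IZR, <- !INR_IZR_INZ, mult_INR.
    pose proof (Aprod_pos A v hpos n). pose proof (hpos (S n)).
    apply lt_0_INR in H. apply lt_0_INR in H0. simpl. field. lra.
Qed.

Lemma mono_up (u : nat -> R) : (forall n, (u n <= u (S n))%R) -> forall n k, (u n <= u (k + n)%nat)%R.
Proof. intros H n k. induction k; simpl. lra. specialize (H (k + n)). lra. Qed.

Lemma mono_down (u : nat -> R) : (forall n, (u (S n) <= u n)%R) -> forall n k, (u (k + n)%nat <= u n)%R.
Proof. intros H n k. induction k; simpl. lra. specialize (H (k + n)). lra. Qed.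

Lemma Wz_nonneg A v x : forall n, (0 <= Wz A v x n)%Z.
Proof. induction n; simpl; lia. Qed.

Lemma series_bounds A v x (hpos : forall j, 0 < A (v (S j)) (v j))
  (hx : forall j, x j < A (v (S j)) (v j)) : forall n,
  (Ssum A v x n <= C_v_real A v x <= Ssum A v x n + / INR (Aprod A v n))%R.
Proof.
  assert (Hinc : forall n, (Ssum A v x n <= Ssum A v x (S n))%R).
  { intros n. unfold Ssum. rewrite sum_Sn. change plus with Rplus.
    pose proof (Aprod_pos A v hpos (S n)). apply lt_0_INR in H.
    assert (0 <= INR (x (S n)) / INR (Aprod A v (S n)))%R.
    { apply Rle_mult_inv_pos; [apply pos_INR | exact H]. }
    lra. }
  set (T := fun n => (Ssum A v x n + / INR (Aprod A v n))%R).
  assert (Hdec : forall n, (T (S n) <= T n)%R).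
  { intros n. unfold T. rewrite !Ssum_eq by exact hpos. simpl Wz. simpl (Aprod A v (S n)).
    rewrite plus_IZR, mult_IZR, <- !INR_IZR_INZ, mult_INR.
    pose proof (Aprod_pos A v hpos n) as H. pose proof (hpos (S n)) as H0.
    pose proof (hx (S n)) as H1.
    apply lt_0_INR in H. apply lt_0_INR in H0. apply le_INR in H1. rewrite S_INR in H1.
    set (a := INR (A (v (S (S n))) (v (S n)))) in *.
    set (P := INR (Aprod A v n)) in *.
    set (W := IZR (Wz A v x n)).
    assert (E : (((W / P + / P) - ((INR (x (S n)) + a * W) / (P * a) + / (P * a)))
               = (a - INR (x (S n)) - 1) / (P * a))%R) by (field; lra).
    assert (0 <= (a - INR (x (S n)) - 1) / (P * a))%R as Hp.
    { apply Rle_mult_inv_pos; [lra | apply Rmult_lt_0_compat; lra]. }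
    lra. }
  assert (Hbound : forall n, (Ssum A v x n <= T O)%R).
  { intros n. pose proof (mono_down T Hdec O n). rewrite Nat.add_0_r in H.
    unfold T at 1 in H. pose proof (Aprod_pos A v hpos n). apply lt_0_INR in H0.
    pose proof (Rinv_0_lt_compat _ H0). lra. }
  destruct (ex_finite_lim_seq_incr _ _ Hinc Hbound) as [l HL].
  assert (HCl : C_v_real A v x = l).
  { unfold C_v_real, Series. change (sum_n (fun j => (INR (x j) / INR (Aprod A v j))%R)) with (Ssum A v x). rewrite (is_lim_seq_unique _ _ HL). reflexivity. }
  rewrite HCl.
  intros n. split.
  - pose proof (is_lim_seq_le (fun _ => Ssum A v x n) (fun k => Ssum A v x (k + n)) (Ssum A v x n)
      l) as Hle.
    assert (Hr : Rbar_le (Ssum A v x n) l); [|simpl in Hr; exact Hr].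
    refine (Hle _ (is_lim_seq_const _) _).
    + intros k. apply mono_up. exact Hinc.
    + apply -> is_lim_seq_incr_n. exact HL.
  - pose proof (is_lim_seq_le (fun k => Ssum A v x (k + n)) (fun _ => T n)
      l (T n)) as Hle.
    unfold C_v_real, Series. fold (Ssum A v x). change (Ssum A v x n + / INR (Aprod A v n))%R with (T n).
    assert (Hr : Rbar_le l (T n)); [|simpl in Hr; exact Hr].
    refine (Hle _ _ (is_lim_seq_const _)).
    + intros k. pose proof (mono_down T Hdec n k). unfold T at 1 in H.
      pose proof (Aprod_pos A v hpos (k + n)). apply lt_0_INR in H0.
      pose proof (Rinv_0_lt_compat _ H0). lra.
    + apply -> is_lim_seq_incr_n. exact HL.
Qed.


Lemma ev_const (f : nat -> nat) (b : nat) : (forall n, f n <= f (S n)) -> (forall n, f n <= b) ->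
  exists T, forall n, T <= n -> f n = f T.
Proof.
  intros Hm Hb. apply NNPP. intros Hno.
  assert (Hmono : forall n k, f n <= f (k + n)).
  { intros n k; induction k; simpl; [lia|]. specialize (Hm (k + n)). lia. }
  assert (Hgrow : forall j, exists T, j <= f T).
  { induction j. exists 0; lia. destruct IHj as [T HT].
    apply not_ex_all_not with (n := T) in Hno.
    apply not_all_ex_not in Hno. destruct Hno as [n Hn].
    apply imply_to_and in Hn. destruct Hn as [HTn Hne].
    exists n. replace n with ((n - T) + T) by lia. pose proof (Hmono T (n - T)).
    replace (n - T + T) with n in * by lia. lia. }
  destruct (Hgrow (S b)) as [T HT]. specialize (Hb T). lia.
Qed.

Lemma uniform_K (N : nat) (Q : nat -> nat -> Prop) :
  (forall i K K', K <= K' -> Q i K -> Q i K') ->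
  (forall i, i < N -> exists K, Q i K) -> exists K0, forall i, i < N -> Q i K0.
Proof.
  intros Hup H. induction N.
  - exists 0. intros; lia.
  - destruct IHN as [K1 HK1]. { intros i Hi. apply H. lia. }
    destruct (H N ltac:(lia)) as [K2 HK2].
    exists (Nat.max K1 K2). intros i Hi.
    destruct (Nat.eq_dec i N) as [->|Hne].
    + apply (Hup _ K2); [lia|exact HK2].
    + apply (Hup _ K1); [lia|]. apply HK1. lia.
Qed.

Fixpoint seg (v : nat -> nat) (s l : nat) : list edge :=
  match l with
  | O => []
  | S l' => mkEdge (v (S (s + l'))) (v (s + l')) 0 :: seg v s l'
  end.

Lemma seg_props N A B v s (hvN : forall j, v j < N) (hA1 : forall j, s <= j -> A (v (S j)) (v j) = 1)
  (hB : forall n, B (v (S n)) (v n) = 1%Z) : forall l,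
  valid_path N A (v (s + l)) (seg v s l) /\ length (seg v s l) = l /\
  path_src (v (s + l)) (seg v s l) = v s /\ act_path A B 1 (seg v s l) = (seg v s l, 1%Z).
Proof.
  induction l as [|l IH].
  - simpl. rewrite Nat.add_0_r. repeat split.
  - destruct IH as [H1 [H2 [H3 H4]]].
    replace (s + S l) with (S (s + l)) by lia.
    refine (conj _ (conj _ (conj _ _))).
    + cbn [seg valid_path valid_edge er es em]. refine (conj (conj (hvN _) (conj (hvN _) _)) (conj eq_refl H1)).
      change (0 < A (v (S (s + l))) (v (s + l))). rewrite hA1 by lia. lia.
    + cbn [seg length]. rewrite H2. reflexivity.
    + cbn [seg path_src es]. exact H3.
    + cbn [seg]. rewrite act_path_cons. unfold act_edge. cbn [er es em].
      rewrite hB, hA1 by lia. cbn [fst snd]. change ((1 * 1 + Z.of_nat 0) / Z.of_nat 1)%Z with 1%Z. rewrite H4. reflexivity.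
Qed.

Lemma valid_trunc N A v mu (hvN : forall j, v j < N) (gm : good A v mu) :
  forall n, valid_path N A (v (S n)) (trunc mu n).
Proof.
  assert (He : forall j, valid_edge N A (mu j)).
  { intros j. destruct (gm j) as [h1 [h2 h3]]. unfold valid_edge. rewrite h1, h2. auto. }
  intros n; induction n as [|n IHn].
  - destruct (gm 0) as [h1 [h2 _]]. simpl. refine (conj (He 0) (conj h1 I)).
  - destruct (gm (S n)) as [h1 [h2 _]]. simpl. refine (conj (He (S n)) (conj h1 _)). rewrite h2. exact IHn.
Qed.

Lemma Aprod_one A v : forall T, Aprod A v T = 1 -> forall j, j <= T -> A (v (S j)) (v j) = 1.
Proof.
  induction T; intros H j Hj.
  - assert (j = 0) by lia. subst. exact H.
  - simpl in H. apply Nat.eq_mul_1 in H. destruct H as [H1 H2].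
    destruct (Nat.eq_dec j (S T)) as [->|]. exact H2. apply IHT; [exact H1|lia].
Qed.

Lemma bounded_all_one N A B v (hv : in_EC N A v) (hBv : forall n, B (v (S n)) (v n) = 1%Z)
  (hreg : regular N A B) (b : nat) (hb : forall n, Aprod A v n <= b) :
  forall j, A (v (S j)) (v j) = 1.
Proof.
  assert (hpos : forall j, 0 < A (v (S j)) (v j)) by (intros j; apply hv).
  assert (hvN : forall j, v j < N) by (intros j; apply hv).
  destruct (ev_const (Aprod A v) b (fun n => Aprod_mono A v hpos n 1) hb) as [T HT].
  assert (hA1 : forall j, S T <= j -> A (v (S j)) (v j) = 1).
  { intros j Hj. destruct j as [|n]; [lia|].
    pose proof (HT (S n) ltac:(lia)) as E1. pose proof (HT n ltac:(lia)) as E2.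
    pose proof (Aprod_pos A v hpos T). simpl in E1. rewrite E2 in E1. nia. }
  destruct (uniform_K N (fun i K => forall p, valid_path N A i p -> K <= length p ->
      fst (act_path A B 1 p) = p -> gequiv N A B (path_src i p) (snd (act_path A B 1 p)) 0%Z))
    as [K0 HK0].
  { intros i K K' HKK' HQ p Hp Hl. apply HQ; [exact Hp| lia]. }
  { intros i Hi. exact (hreg i 1%Z Hi). }
  destruct (seg_props N A B v (S T) hvN hA1 hBv K0) as [S1 [S2 [S3 S4]]].
  pose proof (HK0 (v (S T + K0)) (hvN _) (seg v (S T) K0) S1 ltac:(lia) ltac:(rewrite S4; reflexivity)) as Hg.
  rewrite S3, S4 in Hg. simpl snd in Hg.
  set (z := fun j => mkEdge (v (S j)) (v j) 0).
  assert (gz : good A v z).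
  { intros j. unfold z; simpl. repeat split; auto. }
  pose proof (Hg (trunc z T) (valid_trunc N A v z hvN gz T)) as Hg2.
  assert (H0 : fst (act_path A B 0 (trunc z T)) = trunc z T).
  { apply (act_trunc_iff A B v z z hpos hBv gz gz T 0). exists 0%Z. lia. }
  rewrite H0 in Hg2.
  apply (act_trunc_iff A B v z z hpos hBv gz gz T 1) in Hg2. destruct Hg2 as [c Hc].
  pose proof (Aprod_pos A v hpos T).
  assert (HP1 : Aprod A v T = 1).
  { assert (Hc' : (c * Z.of_nat (Aprod A v T) = 1)%Z) by lia.
    assert (Hp : (1 <= Z.of_nat (Aprod A v T))%Z) by lia.
    assert (Z.of_nat (Aprod A v T) = 1%Z) by (destruct (Z_le_gt_dec c 0); nia). lia. }
  intros j. destruct (le_lt_dec j T).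
  - apply (Aprod_one A v T HP1). lia.
  - apply hA1. lia.
Qed.


Lemma mulbounds A v x (hpos : forall j, 0 < A (v (S j)) (v j))
  (hx : forall j, x j < A (v (S j)) (v j)) : forall n,
  (IZR (Wz A v x n) <= C_v_real A v x * INR (Aprod A v n) <= IZR (Wz A v x n) + 1)%R.
Proof.
  intros n. pose proof (series_bounds A v x hpos hx n) as [H1 H2].
  rewrite Ssum_eq in H1, H2 by exact hpos.
  pose proof (Aprod_pos A v hpos n) as Hp. apply lt_0_INR in Hp.
  set (p := INR (Aprod A v n)) in *. set (W := IZR (Wz A v x n)) in *.
  set (C := C_v_real A v x) in *.
  split.
  - apply Rmult_le_compat_r with (r := p) in H1; [|lra].
    replace (W / p * p)%R with W in H1 by (field; lra). exact H1.
  - apply Rmult_le_compat_r with (r := p) in H2; [|lra].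
    replace ((W / p + / p) * p)%R with (W + 1)%R in H2 by (field; lra). exact H2.
Qed.

Lemma list_bound (F : list (nat * Z)) : exists M, (0 <= M)%Z /\ forall x, In x F -> (Z.abs (snd x) <= M)%Z.
Proof.
  induction F as [|a F IH].
  - exists 0%Z. split; [lia|]. intros x [].
  - destruct IH as [M [HM H]]. exists (Z.max M (Z.abs (snd a))). split; [lia|].
    intros x [->|Hx]; [lia|]. specialize (H x Hx). lia.
Qed.

Lemma good_of_X N A v mu (hmu : in_X N A v mu) : good A v mu.
Proof.
  destruct hmu as [hl hs]. intros j. destruct (hl j) as [[_ [_ h3]] h4].
  assert (er (mu j) = v (S j)) by (rewrite <- h4; apply hs).
  rewrite H, hs in h3. rewrite hs. auto.
Qed.


Lemma IZR_nat (n : nat) : IZR (Z.of_nat n) = INR n.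
Proof. symmetry. apply INR_IZR_INZ. Qed.

Theorem proposition6p3 (N : nat) (A : nat -> nat -> nat) (B : nat -> nat -> Z)
  (hKP : katsura_pair N A B)
  (hB01 : forall i j, i < N -> j < N -> B i j = 0%Z \/ B i j = 1%Z)
  (hreg : regular N A B)
  (v : nat -> nat) (hv : in_EC N A v)
  (hBv : forall n, B (v (S n)) (v n) = 1%Z)
  (mu nu : nat -> edge) (hmu : in_X N A v mu) (hnu : in_X N A v nu) :
  ae_equiv A B mu nu <->
  eq_mod1 (C_v_real A v (iota_v mu)) (C_v_real A v (iota_v nu)).
Proof.
  assert (hpos : forall j, 0 < A (v (S j)) (v j)) by (intros j; apply hv).
  assert (hvN : forall j, v j < N) by (intros j; apply hv).
  pose proof (good_of_X N A v mu hmu) as gm.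
  pose proof (good_of_X N A v nu hnu) as gn.
  assert (hxm : forall j, iota_v mu j < A (v (S j)) (v j)) by (intros j; apply gm).
  assert (hxn : forall j, iota_v nu j < A (v (S j)) (v j)) by (intros j; apply gn).
  pose proof (mulbounds A v (iota_v mu) hpos hxm) as Bm.
  pose proof (mulbounds A v (iota_v nu) hpos hxn) as Bn.
  set (Cm := C_v_real A v (iota_v mu)) in *.
  set (Cn := C_v_real A v (iota_v nu)) in *.
  set (Wm := Wz A v (iota_v mu)) in *.
  set (Wn := Wz A v (iota_v nu)) in *.
  split.
  -
    intros [F [g Hg]].
    destruct (list_bound F) as [M [HM0 HM]].
    set (D := (Cn - Cm)%R).
    set (K := (IZR M + 1)%R).
    assert (HK : (1 <= K)%R) by (unfold K; apply IZR_le in HM0; lra).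
    assert (E : forall n, exists c : Z, (Rabs (D + IZR c) * INR (Aprod A v n) <= K)%R).
    { intros n. destruct (Hg n) as [Hin [_ Hact]].
      apply (act_trunc_iff A B v mu nu hpos hBv gm gn) in Hact. destruct Hact as [c Hc].
      exists c. pose proof (HM _ Hin) as Hk.
      set (k := snd (g n)) in *.
      assert (Hk' : (IZR (- M) <= IZR k <= IZR M)%R) by (split; apply IZR_le; lia).
      rewrite opp_IZR in Hk'.
      change (Wz A v (iota_v nu) n) with (Wn n) in Hc. change (Wz A v (iota_v mu) n) with (Wm n) in Hc.
      apply (f_equal IZR) in Hc. rewrite minus_IZR, plus_IZR, mult_IZR, IZR_nat in Hc.
      pose proof (Aprod_pos A v hpos n) as Hp. apply lt_0_INR in Hp.
      destruct (Bm n) as [Bm1 Bm2]. destruct (Bn n) as [Bn1 Bn2].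
      set (p := INR (Aprod A v n)) in *.
      rewrite <- (Rabs_pos_eq p) by lra. rewrite <- Rabs_mult.
      apply Rabs_le.
      assert (Eq : ((D + IZR c) * p = Cn * p - Cm * p + IZR c * p)%R) by (unfold D; ring).
      rewrite Eq. unfold K. lra. }
    destruct (classic (forall b : nat, exists n, b < Aprod A v n)) as [Hunb | Hbd].
    + destruct (Hunb (Z.to_nat (2 * M + 2))) as [n0 Hn0].
      apply lt_INR in Hn0. rewrite INR_IZR_INZ, Z2Nat.id in Hn0 by lia.
      rewrite plus_IZR, mult_IZR in Hn0.
      assert (Hp0 : (2 * K < INR (Aprod A v n0))%R) by (unfold K; lra).
      destruct (E n0) as [c0 Hc0].
      assert (Hall : forall j, (Rabs (D + IZR c0) * INR (Aprod A v (j + n0)) <= K)%R).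
      { intros j. destruct (E (j + n0)) as [cm Hcm].
        pose proof (Aprod_mono A v hpos n0 j) as Hmo. apply le_INR in Hmo.
        pose proof (Rabs_pos (D + IZR c0)). pose proof (Rabs_pos (D + IZR cm)).
        assert (Ha : (Rabs (D + IZR c0) < / 2)%R).
        { apply Rnot_le_lt. intros Hc. nra. }
        assert (Hb : (Rabs (D + IZR cm) < / 2)%R).
        { apply Rnot_le_lt. intros Hc. nra. }
        assert (cm = c0).
        { apply Rabs_def2 in Ha. apply Rabs_def2 in Hb.
          assert (H1 : (IZR (cm - c0) < 1)%R) by (rewrite minus_IZR; lra).
          assert (H2 : (-1 < IZR (cm - c0))%R) by (rewrite minus_IZR; lra).
          apply lt_IZR in H1. apply lt_IZR in H2. lia. }
        subst cm. exact Hcm. }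
      exists c0.
      destruct (Req_dec (D + IZR c0) 0) as [H0|Hne].
      * unfold D in H0. lra.
      * exfalso. pose proof (Rabs_pos_lt _ Hne) as Hd.
        set (d := Rabs (D + IZR c0)) in *.
        destruct (archimed (K / d)) as [Hup _].
        assert (Hq : (0 < K / d)%R) by (apply Rdiv_lt_0_compat; lra).
        assert (Hupos : (0 < up (K / d))%Z) by (apply lt_IZR; lra).
        destruct (Hunb (Z.to_nat (up (K / d)))) as [n Hn].
        apply lt_INR in Hn. rewrite INR_IZR_INZ, Z2Nat.id in Hn by lia.
        pose proof (Aprod_mono A v hpos n n0) as Hmo. rewrite Nat.add_comm in Hmo. apply le_INR in Hmo.
        specialize (Hall n).
        assert (Hbig : (K / d < INR (Aprod A v (n + n0)))%R) by lra.
        apply Rmult_lt_compat_r with (r := d) in Hbig; [|exact Hd].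
        replace (K / d * d)%R with K in Hbig by (field; lra). lra.
    + assert (Hb : exists b, forall n, Aprod A v n <= b).
      { apply not_all_ex_not in Hbd. destruct Hbd as [b Hb]. exists b. intros n.
        destruct (le_lt_dec (Aprod A v n) b); [assumption|]. exfalso. apply Hb. exists n. exact l. }
      destruct Hb as [b Hb].
      pose proof (bounded_all_one N A B v hv hBv hreg b Hb) as Hone.
      assert (Heq : mu = nu).
      { apply functional_extensionality. intros j.
        destruct (gm j) as [a1 [a2 a3]]. destruct (gn j) as [b1 [b2 b3]].
        rewrite Hone in a3, b3. apply edge_eq; congruence || lia. }
      exists 0%Z. unfold Cm, Cn. rewrite Heq. lra.
  -
    intros [z Hz].
    set (k := fun n => (Wn n - Wm n + z * Z.of_nat (Aprod A v n))%Z).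
    exists (flat_map (fun i => [(i, (-1)%Z); (i, 0%Z); (i, 1%Z)]) (seq 0 N)).
    exists (fun n => (er (mu n), k n)).
    intros n. split; [|split; [reflexivity|]].
    + assert (Hk : (-1 <= k n <= 1)%Z).
      { pose proof (Aprod_pos A v hpos n) as Hp. apply lt_0_INR in Hp.
        destruct (Bm n) as [Bm1 Bm2]. destruct (Bn n) as [Bn1 Bn2].
        assert (Ek : (IZR (k n) = IZR (Wn n) - IZR (Wm n) + (Cm - Cn) * INR (Aprod A v n))%R).
        { unfold k. rewrite plus_IZR, minus_IZR, mult_IZR, IZR_nat, Hz. reflexivity. }
        assert (Eq : ((Cm - Cn) * INR (Aprod A v n) = Cm * INR (Aprod A v n) - Cn * INR (Aprod A v n))%R) by ring.
        split; apply le_IZR; lra. }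
      apply in_flat_map. exists (er (mu n)). split.
      * apply in_seq. destruct (gm n) as [h1 _]. rewrite h1. split; [lia|]. simpl. apply hvN.
      * assert (k n = (-1)%Z \/ k n = 0%Z \/ k n = 1%Z) as [E|[E|E]] by lia; rewrite E; simpl; auto.
    + apply (act_trunc_iff A B v mu nu hpos hBv gm gn). exists z. unfold k, Wn, Wm. cbn [snd]. lia.
Qed.
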